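(* Let $n\ge 2$ and let $A$ be an $n\times n$ real matrix with a real eigenpair $(\lambda,v)$ such that $v$ has no zero components, and let $D=\mathrm{diag}(v)$. Then for every $p\in\mathbb{N}\cup\{\infty\}$ and every $k\in\mathbb{N}$, $$|\det(A)|\le|\lambda|\,\big[\tau_p(D^{-1}A^kD)\big]^{\frac{n-1}{k}}.$$ In particular, $|\det(A)|\le|\lambda|\,\tau_p(D^{-1}A^{n-1}D)$.
   Context: For an $n\times n$ real matrix $M$ ($n\ge 2$) and $p\in\mathbb{N}\cup\{\infty\}$, define $$\tau_p(M)=\max\{\|M^Tx\|_p: x\in\mathbb{R}^n,\ x^Te=0,\ \|x\|_p=1\},$$ where $e$ is the all-ones vector and $\|\cdot\|_p$ is the $\ell_p$-norm. *)

(* Defs.v *)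
From HB Require Import structures.
From mathcomp Require Import all_boot all_order all_algebra.
From mathcomp Require Import all_classical all_reals all_analysis.
Set Implicit Arguments. Unset Strict Implicit. Unset Printing Implicit Defensive.
Import Order.TTheory GRing.Theory Num.Theory.
Local Open Scope classical_set_scope.
Local Open Scope ring_scope.

(* Index p of the l_p norm: p in N ∪ {∞}.  [PFin p] is the finite index p
   (only meaningful for p >= 1, see [valid_pidx]), [PInf] is ∞. *)
Inductive pidx := PFin of nat | PInf.

Definition valid_pidx (p : pidx) : Prop :=
  match p with PFin q => (0 < q)%N | PInf => True end.

Definition lp_norm (R : realType) (n : nat) (p : pidx) (x : 'cV[R]_n) : R :=
  match p with
  | PFin q => (\sum_(i < n) `|x i 0| `^ q%:R) `^ (q%:R^-1)
  | PInf => \big[Num.max/0]_(i < n) `|x i 0|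
  end.

(* tau_p(M) = max { ||M^T x||_p : x^T e = 0, ||x||_p = 1 }
   (written as a supremum; the set is compact, so the sup is attained) *)
Definition tau (R : realType) (n : nat) (p : pidx) (M : 'M[R]_n) : R :=
  sup [set lp_norm p (M^T *m x) | x in
        [set x : 'cV[R]_n | \sum_(i < n) x i 0 = 0 /\ lp_norm p x = 1]].

(* Main.v *)
Require Import Defs.
From HB Require Import structures.
From mathcomp Require Import all_boot all_order all_algebra.
From mathcomp Require Import all_classical all_reals all_analysis.
From mathcomp Require Import ring lra fingroup perm.
Import Order.TTheory GRing.Theory Num.Theory.
Local Open Scope ring_scope.


Section LP.
Variable R : realType.

Lemma lp_ge0 n p (x : 'cV[R]_n) : 0 <= lp_norm p x.
Proof.
case: p => [q|] /=; first exact: powR_ge0.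
elim/big_ind: _ => //= a b ha hb; by rewrite le_max ha.
Qed.

Lemma qinv_ok (q : nat) : (0 < q)%N -> (q%:R : R) * q%:R^-1 = 1.
Proof. by move=> hq; rewrite mulfV // pnatr_eq0 -lt0n. Qed.

Lemma pow_root (a : R) (q : nat) : (0 < q)%N -> 0 <= a -> (a `^ q%:R) `^ q%:R^-1 = a.
Proof. by move=> hq ha; rewrite -powRrM qinv_ok // powRr1. Qed.

Lemma lp_coord n p (x : 'cV[R]_n) i : valid_pidx p -> `|x i 0| <= lp_norm p x.
Proof.
case: p => [q|] /= hq; last exact: (le_bigmax 0 (fun i => `|x i 0|) i).
rewrite -{1}(@pow_root _ q hq (normr_ge0 (x i 0))).
apply: ge0_ler_powR; rewrite ?invr_ge0 ?ler0n // ?nnegrE ?powR_ge0 ?sumr_ge0 //;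
  try by move=> j _; exact: powR_ge0.
rewrite (bigD1 i) //= lerDl sumr_ge0 // => j _; exact: powR_ge0.
Qed.

Lemma lp_bound n p : valid_pidx p -> exists K : R, 0 <= K /\
  forall (x : 'cV[R]_n) c, 0 <= c -> (forall i, `|x i 0| <= c) -> lp_norm p x <= K * c.
Proof.
case: p => [q|] /= hq.
  exists (n%:R `^ q%:R^-1); split; first exact: powR_ge0.
  move=> x c hc hx.
  have -> : c = (c `^ q%:R) `^ q%:R^-1 by rewrite pow_root.
  rewrite -powRM ?ler0n ?powR_ge0 //.
  apply: ge0_ler_powR; rewrite ?invr_ge0 ?ler0n // ?nnegrE ?mulr_ge0 ?ler0n ?powR_ge0 ?sumr_ge0 //;
    try by move=> j _; exact: powR_ge0.
  have -> : n%:R * c `^ q%:R = \sum_(i < n) c `^ q%:R.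
    by rewrite sumr_const card_ord mulr_natl.
  apply: ler_sum => i _; apply: ge0_ler_powR; rewrite ?ler0n ?nnegrE //.
exists 1; split => // x c hc hx; rewrite mul1r.
by apply: bigmax_le.
Qed.

Lemma lp_scale n p (a : R) (x : 'cV[R]_n) : valid_pidx p ->
  lp_norm p (a *: x) = `|a| * lp_norm p x.
Proof.
case: p => [q|] /= hq.
  under eq_bigr => i _ do rewrite mxE normrM powRM //.
  rewrite -mulr_sumr powRM ?powR_ge0 ?sumr_ge0 // ?pow_root //;
  try by move=> i _; exact: powR_ge0.
elim/big_rec2: _ => [|i y1 y2 _ ->]; first by rewrite mulr0.
by rewrite mxE normrM maxr_pMr.
Qed.

Lemma lp_gt0 n p (x : 'cV[R]_n) : valid_pidx p -> x != 0 -> 0 < lp_norm p x.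
Proof.
move=> hp hx.
have [i hi] : exists i, x i 0 != 0.
  apply/existsP; apply: contraNT hx; rewrite negb_exists => /forallP h.
  by apply/eqP/matrixP => i j; rewrite ord1 mxE; apply/eqP; move: (h i); rewrite negbK.
have := @lp_coord _ p x i hp; apply: lt_le_trans; by rewrite normr_gt0.
Qed.

End LP.



Section Core.
Variable R : realType.

Lemma det_bound m (X : 'M[R]_m) c : 0 <= c -> (forall i j, `|X i j| <= c) ->
  `|\det X| <= (\sum_(s : 'S_m) 1) * c ^+ m.
Proof.
move=> hc hX; rewrite /determinant.
apply: le_trans (ler_norm_sum _ _ _) _.
rewrite mulr_suml.
apply: ler_sum => s _.
rewrite mul1r normrM normrX normrN1 expr1n mul1r normr_prod.
rewrite -[m in c ^+ m]card_ord -prodr_const.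
apply: ler_prod => i _; by rewrite normr_ge0 hX.
Qed.

Lemma bern (r : R) j : 1 <= r -> 1 + j%:R * (r - 1) <= r ^+ j.
Proof.
move=> hr; elim: j => [|j ih]; first by rewrite mul0r addr0 expr0.
rewrite exprS -natr1.
have h0 : 0 <= j%:R :> R by rewrite ler0n.
have h1 : r * (1 + j%:R * (r - 1)) <= r * r ^+ j by rewrite ler_wpM2l // (le_trans ler01 hr).
have h2 : 0 <= j%:R * ((r - 1) * (r - 1)) by rewrite mulr_ge0 // mulr_ge0 // subr_ge0.
rewrite mulrDl mul1r; lra.
Qed.

Lemma pow_limit (a b C : R) : 0 <= a -> 0 <= b ->
  (forall j, a ^+ j <= C * b ^+ j) -> a <= b.
Proof.
move=> ha hb h; rewrite leNgt; apply/negP => hab.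
have [b0|bpos] := eqVneq b 0.
  by move: (h 1%N); rewrite b0 expr1 expr0n /= mulr0 leNgt; rewrite b0 in hab; rewrite hab.
have bp : 0 < b by rewrite lt_def bpos hb.
set r := a / b.
have hr : 1 < r by rewrite /r ltr_pdivlMr // mul1r.
have hC : forall j, r ^+ j <= C.
  move=> j; rewrite /r expr_div_n ler_pdivrMr ?exprn_gt0 //; exact: h.
have hC0 : 0 <= C by apply: le_trans (hC 0%N); rewrite expr0.
set j := Num.bound (C / (r - 1)).
have hr1 : 0 < r - 1 by rewrite subr_gt0.
have hj := archi_boundP (divr_ge0 hC0 (ltW hr1)).
have := bern r j (ltW hr); have := hC j.
rewrite -/j in hj; move: hj; rewrite ltr_pdivrMr ?subr_gt0 //.
move=> h1 h2 h3; lra.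
Qed.

End Core.



Section Core2.
Variable R : realType.

Lemma sum_delta n (b : 'I_n) : \sum_(l < n) ((l == b)%:R : R) = 1.
Proof. by rewrite (bigD1 b) //= eqxx big1 ?addr0 // => l /negbTE ->. Qed.

Lemma sum_deltaM n (i : 'I_n) (F : 'I_n -> R) : \sum_(l < n) (i == l)%:R * F l = F i.
Proof.
rewrite (bigD1 i) //= eqxx mul1r big1 ?addr0 // => l hl.
by rewrite eq_sym (negbTE hl) mul0r.
Qed.

Lemma colsum n (G : 'M[R]_n) mu (y : 'cV[R]_n) :
  (forall l, \sum_i G i l = mu) -> \sum_i (G *m y) i 0 = mu * \sum_i y i 0.
Proof.
move=> hG; under eq_bigr => i _ do rewrite mxE.
rewrite exchange_big mulr_sumr /=; apply: eq_bigr => l _.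
by rewrite -mulr_suml hG.
Qed.

Lemma mul_col m n p' (A : 'M[R]_(m, n)) (B : 'M[R]_(n, p')) l b :
  (A *m B) l b = (A *m col b B) l 0.
Proof. by rewrite !mxE; apply: eq_bigr => r _; rewrite mxE. Qed.

Lemma core m p (G : 'M[R]_m.+1) (mu tau : R) : valid_pidx p -> 0 <= tau ->
  (forall l, \sum_i G i l = mu) ->
  (forall x : 'cV[R]_m.+1, \sum_i x i 0 = 0 -> lp_norm p (G *m x) <= tau * lp_norm p x) ->
  exists C : R, forall j, `|\det G| ^+ j <= C * (`|mu| * tau ^+ m) ^+ j.
Proof.
move=> hp ht hG hN.
have powS : forall j (y : 'cV[R]_m.+1), \sum_i (G ^+ j *m y) i 0 = mu ^+ j * \sum_i y i 0.
  elim=> [|j ih] y; first by rewrite expr0 mul1mx expr0 mul1r.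
  by rewrite exprS -mulmxE -mulmxA (@colsum _ G mu _ hG) ih exprS mulrA.
have powN : forall j (y : 'cV[R]_m.+1), \sum_i y i 0 = 0 ->
    lp_norm p (G ^+ j *m y) <= tau ^+ j * lp_norm p y.
  move=> j y hy; elim: j => [|j ih]; first by rewrite expr0 mul1mx expr0 mul1r.
  rewrite exprS -mulmxE -mulmxA.
  apply: le_trans (hN _ _) _; first by rewrite powS hy mulr0.
  by rewrite exprS -mulrA ler_wpM2l.
have [K [hK0 hK]] := @lp_bound R m.+1 p hp.
pose S : 'M[R]_m.+1 := \matrix_(i, l) (if i == ord_max then 1 else (i == l)%:R).
pose P : 'M[R]_m.+1 := \matrix_(i, b) (if b == ord_max then (i == ord_max)%:R
                                     else (i == b)%:R - (i == ord_max)%:R).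
have SP : S *m P = 1.
  apply/matrixP => i b; rewrite !mxE /S /P.
  case: (eqVneq i ord_max) => [->|hi].
    under eq_bigr => l _ do rewrite !mxE eqxx mul1r.
    case: (eqVneq b ord_max) => [hb|hb]; first subst b.
      by rewrite /= sum_delta.
    by rewrite /= sumrB !sum_delta subrr.
  under eq_bigr => l _ do rewrite !mxE (negbTE hi).
  rewrite (sum_deltaM _ i) /=.
  by case: (eqVneq b ord_max) => [->|hb]; rewrite ?(negbTE hi) ?subr0.
have SX : forall (X : 'M[R]_m.+1) b, (S *m X) ord_max b = \sum_l X l b.
  by move=> X b; rewrite mxE; apply: eq_bigr => l _; rewrite /S mxE eqxx mul1r.
have SX' : forall (X : 'M[R]_m.+1) a b, (S *m X) (lift ord_max a) b = X (lift ord_max a) b.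
  move=> X a b; rewrite mxE -(sum_deltaM _ (lift ord_max a) (fun l => X l b)).
  apply: eq_bigr => l _; rewrite /S mxE; case: eqP => [hl|]; last by rewrite eq_sym; case: eqP.
  by move: (neq_lift ord_max a); rewrite hl eqxx.
have Psum : forall b, \sum_r P r b = (b == ord_max)%:R.
  move=> b; under eq_bigr => r _ do rewrite /P mxE.
  case: (eqVneq b ord_max) => [_|hb] /=; first by rewrite sum_delta.
  by rewrite sumrB !sum_delta subrr.
have Pent : forall r b, `|P r b| <= 1.
  move=> r b; rewrite /P mxE; case: (b == ord_max); case: (r == ord_max); case: (r == b);
    by rewrite /= ?mulr1n ?mulr0n ?subrr ?subr0 ?sub0r ?normrN ?normr1 ?normr0.
exists ((\sum_(s : 'S_m) 1) * K ^+ m) => j.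
pose Q := S *m (G ^+ j *m P).
have detQ : \det Q = \det G ^+ j.
  rewrite /Q !det_mulmx mulrCA -det_mulmx SP det1 mulr1.
  elim: j {Q} => [|j ih]; first by rewrite !expr0 det1.
  by rewrite !exprS -mulmxE det_mulmx ih.
have Qmax : forall b, Q ord_max b = mu ^+ j * (b == ord_max)%:R.
  move=> b; rewrite /Q SX.
  under eq_bigr => l _ do rewrite mul_col.
  by rewrite powS; congr (_ * _); rewrite -Psum; apply: eq_bigr => r _; rewrite mxE.
have Qent : forall a b, `|Q (lift ord_max a) (lift ord_max b)| <= tau ^+ j * K.
  move=> a b; rewrite /Q SX' mul_col.
  have hs : \sum_i (col (lift ord_max b) P) i 0 = 0.
    transitivity (\sum_r P r (lift ord_max b)); first by apply: eq_bigr => r _; rewrite mxE.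
    by rewrite Psum; case: eqP => // h; move: (neq_lift ord_max b); rewrite h eqxx.
  apply: le_trans (@lp_coord R _ _ _ (lift ord_max a) hp) _; apply: le_trans (powN _ _ hs) _.
  rewrite ler_wpM2l ?exprn_ge0 //.
  apply: le_trans (hK _ 1 ler01 _) _; first by move=> i; rewrite mxE.
  by rewrite mulr1.
rewrite -normrX -detQ (expand_det_row Q ord_max) (bigD1 ord_max) //= big1 ?addr0;
  last by move=> b hb; rewrite Qmax (negbTE hb) mulr0 mul0r.
rewrite Qmax eqxx mulr1 /cofactor !normrM !normrX normrN1 expr1n mul1r.
have hd : `|\det (row' ord_max (col' ord_max Q))| <= (\sum_(s : 'S_m) 1) * (tau ^+ j * K) ^+ m.
  apply: det_bound; first exact: mulr_ge0 (exprn_ge0 j ht) hK0.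
  move=> a b; have -> : row' ord_max (col' ord_max Q) a b = Q (lift ord_max a) (lift ord_max b) by rewrite !mxE.
  exact: Qent.
apply: le_trans (ler_wpM2l (exprn_ge0 j (normr_ge0 mu)) hd) _.
rewrite !exprMn -!exprM (mulnC m j).
rewrite le_eqVlt; apply/orP; left; apply/eqP; ring.
Qed.
End Core2.



Section Tau.
Variable R : realType.
Local Open Scope classical_set_scope.

Lemma tau_props m p (M : 'M[R]_m.+2) : valid_pidx p ->
  0 <= tau p M /\ forall x : 'cV[R]_m.+2, \sum_i x i 0 = 0 ->
     lp_norm p (M^T *m x) <= tau p M * lp_norm p x.
Proof.
move=> hp.
set E := [set lp_norm p (M^T *m x) | x in
        [set x : 'cV[R]_m.+2 | \sum_(i < m.+2) x i 0 = 0 /\ lp_norm p x = 1]].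
have -> : tau p M = sup E by [].
have unit : forall x : 'cV[R]_m.+2, \sum_i x i 0 = 0 -> x != 0 ->
    E (lp_norm p (M^T *m ((lp_norm p x)^-1 *: x))).
  move=> x hx hx0; exists ((lp_norm p x)^-1 *: x) => //; split.
    under eq_bigr => i _ do rewrite mxE.
    by rewrite -mulr_sumr hx mulr0.
  rewrite lp_scale // ger0_norm ?invr_ge0 ?lp_ge0 // mulVf //.
  by rewrite gt_eqF // lp_gt0.
pose w : 'cV[R]_m.+2 := \col_i ((i == ord0)%:R - (i == ord_max)%:R).
have hw : \sum_i w i 0 = 0.
  under eq_bigr => i _ do rewrite mxE.
  by rewrite sumrB !sum_delta subrr.
have hw0 : w != 0.
  apply/negP => /eqP /matrixP /(_ ord0 0); rewrite !mxE eqxx /=.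
  by rewrite subr0 => /eqP; rewrite oner_eq0.
have [K [hK0 hK]] := @lp_bound R m.+2 p hp.
set c := \sum_(i < m.+2) \sum_(j < m.+2) `|M j i|.
have hb : has_sup E.
  split; first by eexists; exact: (unit _ hw hw0).
  exists (K * c) => _ [x [hx1 hx2] <-].
  apply: hK; first by rewrite sumr_ge0 // => i _; rewrite sumr_ge0.
  move=> i; rewrite mxE.
  apply: le_trans (ler_norm_sum _ _ _) _.
  apply: (@le_trans _ _ (\sum_j `|M j i|)).
    apply: ler_sum => j _; rewrite mxE normrM ler_piMr //.
    by rewrite -hx2; apply: lp_coord.
  rewrite [c](bigD1 i) //= lerDl sumr_ge0 // => l _; exact: sumr_ge0.
have hom : forall x : 'cV[R]_m.+2, \sum_i x i 0 = 0 ->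
     lp_norm p (M^T *m x) <= sup E * lp_norm p x.
  move=> x hx; case: (eqVneq x 0) => [->|hx0].
    rewrite mulmx0 -(scale0r (0 : 'cV[R]_m.+2)) !lp_scale // normr0 !mul0r mulr0.
    by [].
  have := sup_upper_bound hb (unit _ hx hx0).
  rewrite -scalemxAr lp_scale // ger0_norm ?invr_ge0 ?lp_ge0 //.
  by rewrite ler_pdivrMl ?lp_gt0 // mulrC.
split => //.
have := hom _ hw; have := @lp_gt0 R _ p w hp hw0; have := @lp_ge0 R _ p (M^T *m w).
move=> h1 h2 h3; rewrite leNgt; apply/negP => hs.
have : sup E * lp_norm p w < 0 by rewrite pmulr_llt0.
lra.
Qed.
End Tau.



Theorem corollary4 (R : realType) (n : nat) (hn : (2 <= n)%N)
  (A : 'M[R]_n) (lambda : R) (v : 'cV[R]_n)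
  (hAv : A *m v = lambda *: v) (hv : forall i, v i 0 != 0) :
  let D := diag_mx v^T in
  (forall (p : pidx) (k : nat), valid_pidx p -> (0 < k)%N ->
     `|\det A| <= `|lambda| *
        tau p (invmx D *m (A ^+ k) *m D) `^ ((n - 1)%:R / k%:R))
  /\
  (forall p : pidx, valid_pidx p ->
     `|\det A| <= `|lambda| * tau p (invmx D *m (A ^+ (n - 1)) *m D)).
Proof.
case: n hn A v hAv hv => [|[|m]] // _ A v hAv hv D.
have hDe : D *m const_mx 1 = v.
  by apply/matrixP => i j; rewrite /D mul_diag_mx !mxE mulr1 ord1.
have hAk : forall k, A ^+ k *m v = lambda ^+ k *: v.
  elim=> [|k ih]; first by rewrite !expr0 mul1mx scale1r.
  by rewrite exprSr -mulmxE -mulmxA hAv -scalemxAr ih scalerA exprSr mulrC.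
have hDu : D \in unitmx.
  rewrite unitmxE unitfE /D det_diag; apply/prodf_neq0 => i _; rewrite mxE; exact: hv.
have hdetD : \det D != 0 by rewrite -unitfE -unitmxE.
have part1 : forall (p : pidx) (k : nat), valid_pidx p -> (0 < k)%N ->
     `|\det A| <= `|lambda| * tau p (invmx D *m (A ^+ k) *m D) `^ ((m.+2 - 1)%:R / k%:R).
  move=> p k hp hk.
  set M := invmx D *m (A ^+ k) *m D.
  have [ht hN] := @tau_props R m p M hp.
  have hMe : M *m (const_mx 1 : 'cV[R]_m.+2) = lambda ^+ k *: (const_mx 1 : 'cV[R]_m.+2).
    by rewrite /M -mulmxA hDe -mulmxA hAk -scalemxAr -hDe mulKmx.
  have hcol : forall l, \sum_i M^T i l = lambda ^+ k.
    move=> l; move/matrixP/(_ l 0): (hMe); rewrite !mxE mulr1 => <-.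
    by apply: eq_bigr => i _; rewrite !mxE mulr1.
  have hdet : \det M^T = \det A ^+ k.
    rewrite det_tr /M !det_mulmx det_inv mulrC mulrA mulfV // mul1r.
    elim: (k) => [|k' ih]; first by rewrite !expr0 det1.
    by rewrite !exprS -mulmxE det_mulmx ih.
  have [C hC] := @core R m.+1 p M^T (lambda ^+ k) (tau p M) hp ht hcol hN.
  have hle : `|\det A| ^+ k <= (`|lambda| ^+ k * tau p M ^+ m.+1).
    apply: (@pow_limit R _ _ C); rewrite ?exprn_ge0 ?mulr_ge0 ?exprn_ge0 //.
    by move=> j; move: (hC j); rewrite hdet normrX normrX.
  rewrite subn1 /=.
  set t := tau p M `^ (m.+1%:R / k%:R).
  have ht0 : 0 <= t by exact: powR_ge0.
  have htk : t ^+ k = tau p M ^+ m.+1.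
    rewrite -powR_mulrn // /t -powRrM mulfVK ?powR_mulrn //.
    by rewrite pnatr_eq0 -lt0n.
  rewrite -(ler_pXn2r hk) ?nnegrE ?mulr_ge0 // exprMn htk.
  exact: hle.
split => //.
move=> p hp; have := part1 p m.+1 hp isT.
rewrite subn1 /= divff ?pnatr_eq0 // powRr1 //.
by have [] := @tau_props R m p (invmx D *m A ^+ m.+1 *m D) hp.
Qed.
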